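(* Let $G$ and $H$ be ordered graphs, each with $m$ edges, and suppose $M_{1,G}=M_{1,H}$ in $\mathbb C^m$. Then the edge bijection sending the $k$-th edge of $G$ to the $k$-th edge of $H$ (for $k=1,\dots,m$) is a cycle isomorphism.
   Context: An ordered graph is a finite vertex set with a sequence $(E_1,\dots,E_m)$ of distinct unordered pairs of distinct vertices. For a configuration $\mathbf p$ assigning $\mathbf p_i\in\mathbb C$ to each vertex, $m_G(\mathbf p)\in\mathbb C^m$ has $k$-th coordinate $(\mathbf p_i-\mathbf p_j)^2$ with $E_k=\{i,j\}$; $M_{1,G}$ is the Zariski closure of the image of $m_G$. A set of edges is cycle supported if its edges, in some order, form a simple cycle. An edge bijection between two graphs is a cycle isomorphism if a set of edges is cycle supported exactly when its image is cycle supported. *)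

(* Defs.v *)
From HB Require Import structures.
From mathcomp Require Import all_boot all_order all_algebra.
Set Implicit Arguments. Unset Strict Implicit. Unset Printing Implicit Defensive.
Import Order.TTheory GRing.Theory Num.Theory.
Local Open Scope ring_scope.

Definition edge_is (T : eqType) (e : T * T) (x y : T) : bool :=
  (e == (x, y)) || (e == (y, x)).

(* An ordered graph on the finite vertex type T with m edges: the k-th edge
   is E k, an unordered pair represented by an ordered pair of vertices. *)
Definition ordered_graph (T : finType) (m : nat) (E : 'I_m -> T * T) : Prop :=
  (forall k, (E k).1 != (E k).2) /\
  (forall k l, edge_is (E k) (E l).1 (E l).2 -> k = l).

Definition mG (R : nzRingType) (T : finType) (m : nat) (E : 'I_m -> T * T)
  (p : T -> R) : 'I_m -> R :=
  fun k => (p (E k).1 - p (E k).2) ^+ 2.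

Inductive mpoly (R : Type) (m : nat) : Type :=
| PVar of 'I_m
| PConst of R
| PAdd of mpoly R m & mpoly R m
| PMul of mpoly R m & mpoly R m
| POpp of mpoly R m.

Fixpoint peval (R : nzRingType) (m : nat) (f : mpoly R m) (x : 'I_m -> R) : R :=
  match f with
  | PVar i => x i
  | PConst c => c
  | PAdd f g => peval f x + peval g x
  | PMul f g => peval f x * peval g x
  | POpp f => - peval f x
  end.

Definition zariski_closure (R : nzRingType) (m : nat) (S : ('I_m -> R) -> Prop)
  (x : 'I_m -> R) : Prop :=
  forall f : mpoly R m, (forall y, S y -> peval f y = 0) -> peval f x = 0.

Definition M1 (R : nzRingType) (T : finType) (m : nat) (E : 'I_m -> T * T)
  (x : 'I_m -> R) : Prop :=
  zariski_closure (fun y => exists p : T -> R, y = mG E p) x.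

(* The edge set S (of indices) is cycle supported: its edges, in some order,
   form a simple cycle, i.e. there are distinct vertices v_0, ..., v_{n-1},
   n >= 3, such that S is exactly the set of edges {v_i, v_{i+1 mod n}}. *)
Definition cycle_supported (T : finType) (m : nat) (E : 'I_m -> T * T)
  (S : {set 'I_m}) : Prop :=
  exists s : seq T,
    [/\ (2 < size s)%N, uniq s,
      (forall i, (i < size s)%N ->
         exists2 k, k \in S &
           edge_is (E k) (nth (head (E k).1 s) s i)
                         (nth (head (E k).1 s) s ((i.+1) %% size s)))
    & (forall k, k \in S -> exists2 i, (i < size s)%N &
           edge_is (E k) (nth (E k).1 s i) (nth (E k).1 s ((i.+1) %% size s)))].

Definition cycle_isomorphism_id (T1 T2 : finType) (m : nat)
  (E1 : 'I_m -> T1 * T1) (E2 : 'I_m -> T2 * T2) : Prop :=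
  forall S : {set 'I_m}, cycle_supported E1 S <-> cycle_supported E2 S.

(* Main.v *)
Require Import Defs.
From HB Require Import structures.
From mathcomp Require Import all_boot all_order all_algebra ring.
From Stdlib Require Import Classical.
Set Implicit Arguments. Unset Strict Implicit. Unset Printing Implicit Defensive.
Import Order.TTheory GRing.Theory Num.Theory.
Local Open Scope ring_scope.
Section Poly.
Variable R : comNzRingType.

Inductive ex (V : Type) : Type :=
| EVar of V | ECst of R | EAdd of ex V & ex V | EMul of ex V & ex V | EOpp of ex V.

Fixpoint ev V (r : V -> R) (e : ex V) : R :=
  match e with
  | EVar v => r v | ECst c => c | EAdd a b => ev r a + ev r b
  | EMul a b => ev r a * ev r b | EOpp a => - ev r a end.

Fixpoint bind V W (s : V -> ex W) (e : ex V) : ex W :=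
  match e with
  | EVar v => s v | ECst c => @ECst W c | EAdd a b => EAdd (bind s a) (bind s b)
  | EMul a b => EMul (bind s a) (bind s b) | EOpp a => EOpp (bind s a) end.

Lemma ev_bind V W (s : V -> ex W) r e : ev r (bind s e) = ev (fun v => ev r (s v)) e.
Proof. by elim: e => //= [a -> b -> | a -> b -> | a ->]. Qed.

Lemma eq_ev V (r1 r2 : V -> R) e : r1 =1 r2 -> ev r1 e = ev r2 e.
Proof. by move=> h; elim: e => //= [a -> b -> | a -> b -> | a ->]. Qed.

Fixpoint dec V (w : ex V) (e : ex (option V)) : ex V * ex V :=
  match e with
  | EVar None => (@ECst V 0, @ECst V 1)
  | EVar (Some v) => (EVar v, @ECst V 0)
  | ECst c => (@ECst V c, @ECst V 0)
  | EAdd a b => (EAdd (dec w a).1 (dec w b).1, EAdd (dec w a).2 (dec w b).2)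
  | EMul a b => (EAdd (EMul (dec w a).1 (dec w b).1) (EMul w (EMul (dec w a).2 (dec w b).2)),
                 EAdd (EMul (dec w a).1 (dec w b).2) (EMul (dec w a).2 (dec w b).1))
  | EOpp a => (EOpp (dec w a).1, EOpp (dec w a).2) end.

Lemma ev_dec V (w : ex V) r z e : z ^+ 2 = ev r w ->
  ev (oapp r z) e = ev r (dec w e).1 + z * ev r (dec w e).2.
Proof.
move=> hz; elim: e => /=.
- by case=> [v|] /=; ring.
- by move=> c; ring.
- by move=> a -> b ->; ring.
- by move=> a -> b ->; rewrite -hz; ring.
- by move=> a ->; ring.
Qed.

Definition normw V (w : ex V) (e : ex (option V)) : ex V :=
  EAdd (EMul (dec w e).1 (dec w e).1) (EOpp (EMul w (EMul (dec w e).2 (dec w e).2))).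

Lemma ev_norm V (w : ex V) r z e : z ^+ 2 = ev r w ->
  ev r (normw w e) = ev (oapp r z) e * ev (oapp r (- z)) e.
Proof.
move=> hz; have hz' : (- z) ^+ 2 = ev r w by rewrite sqrrN.
rewrite (ev_dec _ hz) (ev_dec _ hz') /= -hz; ring.
Qed.

Variable m : nat.
Variable f : nat -> 'I_m.

Definition sub (o : option 'I_m) : ex (option (option 'I_m)) :=
  match o with
  | None => EAdd (EVar (Some None)) (EOpp (EVar None))
  | Some i => EVar (Some (Some i)) end.

Fixpoint Phi (k : nat) : ex (option 'I_m) :=
  match k with
  | 0 => EVar None
  | k.+1 => normw (EVar (Some (f k))) (bind sub (Phi k)) end.

Lemma Phi_step (x : 'I_m -> R) t z k : z ^+ 2 = x (f k) ->
  ev (oapp x t) (Phi k.+1) = ev (oapp x (t - z)) (Phi k) * ev (oapp x (t + z)) (Phi k).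
Proof.
move=> hz; rewrite [Phi k.+1]/= (ev_norm _ (r := oapp x t) (z := z)) //.
rewrite !ev_bind; congr (_ * _); apply: eq_ev; case=> [i|] //=.
by rewrite opprK.
Qed.

Definition Fpol (n : nat) : ex 'I_m := normw (EVar (f n.-1)) (Phi n.-1).

Lemma ev_F (x : 'I_m -> R) z n : z ^+ 2 = x (f n.-1) ->
  ev x (Fpol n) = ev (oapp x z) (Phi n.-1) * ev (oapp x (- z)) (Phi n.-1).
Proof. by move=> hz; rewrite /Fpol (ev_norm _ (z := z)). Qed.

Lemma Phi_zero (x : 'I_m -> R) k t : (forall i, (i < k)%N -> x (f i) = 0) ->
  ev (oapp x t) (Phi k) = t ^+ (2 ^ k).
Proof.
elim: k t => [|k IH] t hx; first by rewrite expr1.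
rewrite (Phi_step _ (z := 0)); last by rewrite hx // expr0n.
rewrite subr0 addr0 !IH; last by move=> i hi; apply: hx; apply: ltnW.
by rewrite expnS mul2n -addnn exprD.
Qed.

End Poly.
Arguments Fpol {R m} f n.
Arguments Phi {R m} f k.


Section G.
Variable C : numClosedFieldType.
Variables (T : finType) (m : nat) (E : 'I_m -> T * T).

Fixpoint toP (e : ex C 'I_m) : mpoly C m :=
  match e with
  | EVar i => PVar C i | ECst c => PConst m c | EAdd a b => PAdd (toP a) (toP b)
  | EMul a b => PMul (toP a) (toP b) | EOpp a => POpp (toP a) end.

Lemma peval_toP e x : peval (toP e) x = ev x e.
Proof. by elim: e => //= [a -> b -> | a -> b -> | a ->]. Qed.

Lemma image_M1 (p : T -> C) : M1 E (mG E p).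
Proof. by move=> f hf; apply: hf; exists p. Qed.

Lemma mG_edge (p : T -> C) e a b : edge_is (E e) a b -> mG E p e = (p a - p b) ^+ 2.
Proof. by rewrite /edge_is /mG; case/orP => /eqP -> //=; rewrite -opprB sqrrN. Qed.

Lemma edge_is2 (e : T * T) a b c d : edge_is e a b -> edge_is e c d ->
  (a = c /\ b = d) \/ (a = d /\ b = c).
Proof.
case: e => e1 e2; rewrite /edge_is !xpair_eqE.
by do 2 case/orP=> /andP [/eqP <- /eqP <-]; auto.
Qed.

Lemma edge_is_same (e e' : T * T) a b : edge_is e a b -> edge_is e' a b -> edge_is e' e.1 e.2.
Proof.
case: e => e1 e2; rewrite /edge_is !xpair_eqE /=.
by case/orP=> /andP [/eqP -> /eqP ->] //; rewrite orbC.
Qed.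

Definition P (S : {set 'I_m}) := forall y : 'I_m -> C,
  exists x, M1 E x /\ forall k, k \in S -> x k = y k.

Lemma P_sub (S S' : {set 'I_m}) : S' \subset S -> P S -> P S'.
Proof.
move=> /subsetP hs hP y; have [x [hx hy]] := hP y.
by exists x; split => // k /hs; apply: hy.
Qed.

Lemma cycle_poly n (v : nat -> T) (f : nat -> 'I_m) : (1 < n)%N ->
  (forall i, (i < n.-1)%N -> edge_is (E (f i)) (v i) (v i.+1)) ->
  edge_is (E (f n.-1)) (v n.-1) (v 0) ->
  (forall p, ev (mG E p) (@Fpol C m f n) = 0) /\
  (forall x, (forall i, (i < n.-1)%N -> x (f i) = 0) -> x (f n.-1) = 1 ->
     ev x (@Fpol C m f n) = 1).
Proof.
move=> hn hpath hlast; split.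
  move=> p.
  have van : forall k, (k <= n.-1)%N ->
      ev (oapp (mG E p) (p (v k) - p (v 0))) (Phi f k) = 0.
    elim=> [|k IH] hk; first by rewrite subrr.
    rewrite (Phi_step _ _ (z := p (v k.+1) - p (v k))); last first.
      by rewrite (mG_edge _ (hpath _ hk)) -opprB sqrrN.
    have -> : p (v k.+1) - p (v 0) - (p (v k.+1) - p (v k)) = p (v k) - p (v 0) by ring.
    by rewrite IH ?mul0r // ltnW.
  rewrite (ev_F _ (z := p (v n.-1) - p (v 0))); first by rewrite van // mul0r.
  by rewrite (mG_edge _ hlast).
move=> x hx h1.
rewrite (ev_F _ (z := 1)); last by rewrite h1 expr1n.
rewrite !Phi_zero // expr1n mul1r.
case: n hn {hpath hlast hx h1} => [|[|k]] //= _.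
by rewrite expnS exprM sqrrN expr1n expr1n.
Qed.


Lemma cyc_edges (S : {set 'I_m}) (s : seq T) (d : T) : (2 < size s)%N ->
  (forall i, (i < size s)%N ->
         exists2 k, k \in S &
           edge_is (E k) (nth (head (E k).1 s) s i)
                         (nth (head (E k).1 s) s ((i.+1) %% size s))) ->
  exists f : nat -> 'I_m, forall i, (i < size s)%N ->
    f i \in S /\ edge_is (E (f i)) (nth d s i) (nth d s (i.+1 %% size s)).
Proof.
move=> hs h3.
have hs0 : (0 < size s)%N by apply: ltn_trans hs.
have [k0 _ _] := h3 0 hs0.
exists (fun i => odflt k0 [pick k | (k \in S) &&
   edge_is (E k) (nth d s i) (nth d s (i.+1 %% size s))]).
move=> i hi; case: pickP => [k /andP [] //|hn].
exfalso; have [k hk he] := h3 i hi.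
rewrite (set_nth_default d _ hi) (set_nth_default d _ (ltn_pmod _ hs0)) in he.
by move: (hn k); rewrite hk he.
Qed.

Lemma cyc_notP (S : {set 'I_m}) : cycle_supported E S -> ~ P S.
Proof.
case=> s [hs hu h3 h4] hP.
have hs0 : (0 < size s)%N by apply: ltn_trans hs.
have [k0 _ _] := h3 0 hs0.
set d := (E k0).1.
have [f hf] := cyc_edges d hs h3.
set n := size s in hs hs0 hf.
have hnK : n.-1.+1 = n by rewrite prednK.
have hlt : forall i, (i < n.-1)%N -> (i < n)%N.
  by move=> i hi; rewrite -hnK ltnS ltnW.
have hsm : forall i, (i < n.-1)%N -> (i.+1 %% n = i.+1)%N.
  by move=> i hi; rewrite modn_small // -hnK ltnS.
have hlast : (n.-1.+1 %% n = 0)%N by rewrite hnK modnn.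
have hn1 : (n.-1 < n)%N by rewrite -hnK.
have hdist : forall i, (i < n.-1)%N -> f i != f n.-1.
  move=> i hi; apply/eqP => he.
  have [_ e1] := hf i (hlt _ hi); have [_ e2] := hf n.-1 hn1.
  rewrite he hsm // in e1; rewrite hlast in e2.
  have h0 : (0 < n)%N := hs0.
  have h1 : (1 < n)%N by apply: ltn_trans hs.
  case: (edge_is2 e1 e2) => [[a b]|[a b]].
    have := nth_uniq d (hlt _ hi) hn1 hu; rewrite a eqxx => /esym/eqP ei.
    by move: hi; rewrite ei ltnn.
  have := nth_uniq d (hlt _ hi) h0 hu; rewrite a eqxx => /esym/eqP ei.
  rewrite ei in b; have := nth_uniq d h1 hn1 hu; rewrite b eqxx => /esym/eqP e1n.
  by move: hs; rewrite -hnK -e1n.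
have [van nz] := @cycle_poly n (fun i => nth d s i) f (ltnW hs)
   (fun i hi => let: conj _ e := hf i (hlt _ hi) in
                 eq_rect _ (fun j => edge_is (E (f i)) (nth d s i) (nth d s j)) e _ (hsm _ hi))
   (let: conj _ e := hf n.-1 hn1 in
      eq_rect _ (fun j => edge_is (E (f n.-1)) (nth d s n.-1) (nth d s j)) e _ hlast).
have [x [hx hy]] := hP (fun k => if k == f n.-1 then 1 else 0).
have := hx (toP (Fpol f n)).
rewrite peval_toP nz.
- move=> h; have h1 : (1 : C) = 0.
    by apply: h => y [p ->]; rewrite peval_toP van.
  by move/eqP: h1; rewrite oner_eq0.
- move=> i hi; rewrite hy; first by rewrite (negbTE (hdist _ hi)).
  by have [] := hf i (hlt _ hi).
- by rewrite hy ?eqxx //; have [] := hf n.-1 hn1.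
Qed.


Lemma cyc_Pdel (S : {set 'I_m}) k : ordered_graph E -> cycle_supported E S ->
  k \in S -> P (S :\ k).
Proof.
move=> [_ og] [s [hs hu h3 h4]] hk y.
set d := (E k).1.
have [f hf] := cyc_edges d hs h3.
set n := size s in hs hf h4 *.
have [j hj ej] := h4 k hk.
pose c t := sqrtC (y (f t)).
pose g i := \sum_(0 <= t < i | t != j) c t -
   (if (j < i)%N then \sum_(0 <= t < n | t != j) c t else 0).
pose p v := if v \in s then g (index v s) else 0.
have gS : forall i, i != j -> g i.+1 = g i + c i.
  move=> i hij; rewrite /g big_mkcond big_nat_recr //= -big_mkcond /= hij.
  have -> : (j < i.+1)%N = (j < i)%N by rewrite ltnS leq_eqVlt eq_sym (negbTE hij).
  by ring.
have g0 : g 0%N = 0 by rewrite /g big_geq // subr0.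
have gn : g n = 0 by rewrite /g hj subrr.
exists (mG E p); split; first exact: image_M1.
move=> k'; rewrite in_setD1 => /andP [hne hk'].
have [i hi ei] := h4 k' hk'.
rewrite (set_nth_default d _ hi) (set_nth_default d _ (ltn_pmod _ (ltn_trans _ hs))) in ei.
have hij : i != j.
  apply/eqP => eij; rewrite eij in ei.
  by move: hne; rewrite (og k' k (edge_is_same ej ei)) eqxx.
have fi : f i = k'.
  have [_ e2] := hf i hi; exact: og _ _ (edge_is_same ei e2).
rewrite (mG_edge _ ei) /p mem_nth // index_uniq // mem_nth ?ltn_pmod ?(ltn_trans _ hs) //.
rewrite index_uniq ?ltn_pmod ?(ltn_trans _ hs) //.
have -> : g (i.+1 %% n)%N = g i.+1.
  move: hi; rewrite leq_eqVlt => /orP [/eqP hn|hi']; first by rewrite hn modnn g0 gn.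
  by rewrite modn_small.
rewrite gS // -fi -(sqrtCK (y (f i))) -/(c i).
  by ring.
by [].
Qed.


Lemma edge_isC (e : T * T) a b : edge_is e a b = edge_is e b a.
Proof. by rewrite /edge_is orbC. Qed.

Lemma edge_is_self (e : T * T) : edge_is e e.1 e.2.
Proof. by rewrite /edge_is -surjective_pairing eqxx. Qed.

Lemma realize (S : {set 'I_m}) : ordered_graph E ->
  (forall Cs : {set 'I_m}, Cs \subset S -> ~ cycle_supported E Cs) ->
  forall y : 'I_m -> C, exists p : T -> C, forall k, k \in S -> mG E p k = y k.
Proof.
move=> [ogd og].
have [n hn] : exists n, #|S| = n by eexists.
elim: n S hn => [|n IH] S hS hac y.
  exists (fun _ => 0) => k; move/eqP: hS; rewrite cards_eq0 => /eqP ->.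
  by rewrite in_set0.
have : (0 < #|S|)%N by rewrite hS.
rewrite card_gt0 => /set0Pn [k hk].
set S' := S :\ k.
have hS' : #|S'| = n by move: hS; rewrite (cardsD1 k) hk add1n => [[]].
have [p' hp'] := IH S' hS' (fun Cs hCs => hac Cs (subset_trans hCs (subD1set S k))) y.
set a := (E k).1; set b := (E k).2.
pose r : rel T := fun u v => [exists e in S', edge_is (E e) u v].
have rsym : symmetric r.
  by move=> u v; apply/existsP/existsP => [] [e /andP [he1 he2]]; exists e;
     rewrite he1 edge_isC.
case: (boolP (connect r b a)) => hc.
  exfalso.
  case/connectP: hc => q hq.
  case/shortenP: hq => q' hq' huq _ ha.
  have hab : a != b := ogd k.
  have hsz : (2 < size (b :: q'))%N.
    case: q' hq' huq ha => [|a' [|a'' q'']] //=.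
      by move=> _ _ hh; move: hab; rewrite hh eqxx.
    move=> /andP [/existsP [e /andP [he1 he2]] _] _ ha'.
    rewrite -ha' edge_isC in he2.
    have := og e k he2 => ek.
    by move: he1; rewrite ek /S' in_setD1 eqxx.
  set s := b :: q' in hsz *.
  pose Cs := [set e in S | [exists i : 'I_(size s),
                edge_is (E e) (nth b s i) (nth b s (i.+1 %% size s))]].
  apply: (hac Cs); first by apply/subsetP => e; rewrite inE => /andP [].
  exists s; split => //.
  - move=> i hi.
    move: (hi); rewrite leq_eqVlt => /orP [/eqP hi1|hi1].
      have he : edge_is (E k) (nth b s i) (nth b s (i.+1 %% size s)).
        rewrite hi1 modnn.
        have -> : nth b s i = a.
          have -> : i = (size s).-1 by rewrite -hi1.
          by rewrite nth_last /= ha.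
        exact: edge_is_self.
      exists k => //.
      rewrite inE hk /=; apply/existsP; exists (Ordinal hi); exact: he.
    rewrite modn_small //.
    have := (pathP b hq' i hi1).
    move=> /existsP [e /andP [he1 he2]].
    exists e.
      rewrite inE (subsetP (subD1set S k) _ he1) /=.
      apply/existsP; exists (Ordinal hi); rewrite /= modn_small //.
    exact: he2.
  - move=> e; rewrite inE => /andP [he /existsP [i hi]].
    exists i => //.
    rewrite (set_nth_default b) // (set_nth_default b) //.
    by apply: ltn_pmod; apply: ltn_trans hsz.
pose c0 := p' a - p' b - sqrtC (y k).
exists (fun v => p' v + (if connect r b v then c0 else 0)).
move=> k' hk'.
case: (eqVneq k' k) => [->|hne].
  rewrite /mG -/a -/b connect0 (negbTE hc) addr0.
  have -> : p' a - (p' b + c0) = sqrtC (y k) by rewrite /c0; ring.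
  by rewrite sqrtCK.
have hk'S : k' \in S' by rewrite in_setD1 hne.
have hr : r (E k').1 (E k').2.
  by apply/existsP; exists k'; rewrite hk'S edge_is_self.
rewrite /mG; have -> : connect r b (E k').2 = connect r b (E k').1.
  apply/idP/idP => h.
    by apply: connect_trans h (connect1 _); rewrite rsym.
  exact: connect_trans h (connect1 hr).
rewrite -(hp' k' hk'S) /mG.
by case: ifP => _; congr (_ ^+ 2); ring.
Qed.


Lemma charac (S : {set 'I_m}) : ordered_graph E ->
  (cycle_supported E S <-> ~ P S /\ forall k, k \in S -> P (S :\ k)).
Proof.
move=> og; split.
  move=> hc; split; first exact: cyc_notP.
  by move=> k hk; apply: cyc_Pdel.
move=> [hnP hdel].
case: (classic (exists Cs : {set 'I_m}, Cs \subset S /\ cycle_supported E Cs)).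
  move=> [Cs [hsub hcs]].
  case: (eqVneq Cs S) => [<- //|hne].
  have : S :\: Cs != set0.
    apply/negP => /eqP h0; move: hne; rewrite eqEsubset hsub /=.
    by move/eqP: h0; rewrite setD_eq0 => ->.
  case/set0Pn => k; rewrite inE => /andP [hkC hkS].
  exfalso; apply: (cyc_notP hcs).
  apply: P_sub (hdel k hkS).
  apply/subsetP => e he; rewrite in_setD1 (subsetP hsub _ he) andbT.
  by apply/eqP => ek; move: hkC; rewrite -ek he.
move=> hno; exfalso; apply: hnP => y.
have [p hp] := realize og (fun Cs hCs hcs => hno (ex_intro _ Cs (conj hCs hcs))) y.
by exists (mG E p); split; [exact: image_M1 | exact: hp].
Qed.

End G.

Theorem mainTheorem14 (C : numClosedFieldType) (T1 T2 : finType) (m : nat)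
  (EG : 'I_m -> T1 * T1) (EH : 'I_m -> T2 * T2) :
  ordered_graph EG -> ordered_graph EH ->
  (forall x : 'I_m -> C, M1 EG x <-> M1 EH x) ->
  cycle_isomorphism_id EG EH.
Proof.
move=> oG oH hM S.
have hP : forall S', P C EG S' <-> P C EH S'.
  move=> S'; split=> h y; have [x [hx hy]] := h y; exists x; split => //; exact/hM.
rewrite (charac C S oG) (charac C S oH).
split=> [[h1 h2]|[h1 h2]]; split.
- by move/hP.
- by move=> k hk; apply/hP; apply: h2.
- by move/hP.
- by move=> k hk; apply/hP; apply: h2.
Qed.
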